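(* Let $(H,\Lambda,\lambda)$ be an integral Hopf algebra in a strict symmetric monoidal category $\mathcal{C}$, with multiplication $\mu$, comultiplication $\Delta$ and antipode $s$. Define $\beta:=\lambda\circ\mu\colon H\otimes H\to I$ and $\gamma:=(s\otimes\mathrm{id}_H)\circ\Delta\circ\Lambda\colon I\to H\otimes H$. Then $H$ is nondegenerate, i.e. both $(\mathrm{id}_H\otimes\beta)\circ(\gamma\otimes\mathrm{id}_H)=\mathrm{id}_H$ and $(\beta\otimes\mathrm{id}_H)\circ(\mathrm{id}_H\otimes\gamma)=\mathrm{id}_H$ hold, if and only if $\lambda\circ s\circ\Lambda=\mathrm{id}_I$.
   Context: $\mathcal{C}$ is a strict symmetric monoidal category with unit object $I$ and symmetry $\sigma$. A Hopf algebra $(H,\mu,\eta,\Delta,\varepsilon,s)$ in $\mathcal{C}$ consists of an object $H$, an associative unital monoid $\mu\colon H\otimes H\to H$, $\eta\colon I\to H$, a coassociative counital comonoid $\Delta\colon H\to H\otimes H$, $\varepsilon\colon H\to I$, satisfying $\Delta\circ\mu=(\mu\otimes\mu)\circ(\mathrm{id}_H\otimes\sigma_{H,H}\otimes\mathrm{id}_H)\circ(\Delta\otimes\Delta)$, $\Delta\circ\eta=\eta\otimes\eta$, $\varepsilon\circ\mu=\varepsilon\otimes\varepsilon$, $\varepsilon\circ\eta=\mathrm{id}_I$, and an antipode $s\colon H\to H$ with $\mu\circ(s\otimes\mathrm{id}_H)\circ\Delta=\eta\circ\varepsilon=\mu\circ(\mathrm{id}_H\otimes s)\circ\Delta$. A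 left cointegral is a point $\Lambda\colon I\to H$ with $\mu\circ(\Lambda\otimes\mathrm{id}_H)=\Lambda\circ\varepsilon$; a right integral is a copoint $\lambda\colon H\to I$ with $(\mathrm{id}_H\otimes\lambda)\circ\Delta=\eta\circ\lambda$. An integral Hopf algebra $(H,\Lambda,\lambda)$ is a Hopf algebra with a chosen left cointegral $\Lambda$ and right integral $\lambda$ such that $\lambda\circ\Lambda=\mathrm{id}_I$. *)

(* Defs.v *)
(* This lets
   strictness be expressed as plain equations between objects, without
   dependent casts on hom-types. *)

Record SSMC := {
  ob : Type;
  mor : Type;
  dom : mor -> ob;
  cod : mor -> ob;
  idm : ob -> mor;
  comp : mor -> mor -> mor;            (* comp g f = g o f *)
  tens_ob : ob -> ob -> ob;
  unit_ob : ob;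
  tens : mor -> mor -> mor;
  sym : ob -> ob -> mor;
  dom_id : forall a, dom (idm a) = a;
  cod_id : forall a, cod (idm a) = a;
  dom_comp : forall f g, cod f = dom g -> dom (comp g f) = dom f;
  cod_comp : forall f g, cod f = dom g -> cod (comp g f) = cod g;
  comp_id_l : forall f, comp (idm (cod f)) f = f;
  comp_id_r : forall f, comp f (idm (dom f)) = f;
  comp_assoc : forall f g h, cod f = dom g -> cod g = dom h ->
      comp h (comp g f) = comp (comp h g) f;
  dom_tens : forall f g, dom (tens f g) = tens_ob (dom f) (dom g);
  cod_tens : forall f g, cod (tens f g) = tens_ob (cod f) (cod g);
  tens_ob_assoc : forall a b c, tens_ob (tens_ob a b) c = tens_ob a (tens_ob b c);
  tens_ob_unit_l : forall a, tens_ob unit_ob a = a;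
  tens_ob_unit_r : forall a, tens_ob a unit_ob = a;
  tens_assoc : forall f g h, tens (tens f g) h = tens f (tens g h);
  tens_unit_l : forall f, tens (idm unit_ob) f = f;
  tens_unit_r : forall f, tens f (idm unit_ob) = f;
  tens_id : forall a b, tens (idm a) (idm b) = idm (tens_ob a b);
  interchange : forall f g f' g', cod f = dom f' -> cod g = dom g' ->
      comp (tens f' g') (tens f g) = tens (comp f' f) (comp g' g);
  dom_sym : forall a b, dom (sym a b) = tens_ob a b;
  cod_sym : forall a b, cod (sym a b) = tens_ob b a;
  sym_nat : forall f g,
      comp (sym (cod f) (cod g)) (tens f g) = comp (tens g f) (sym (dom f) (dom g));
  sym_inv : forall a b, comp (sym b a) (sym a b) = idm (tens_ob a b);
  sym_hex : forall a b c,
      sym a (tens_ob b c) = comp (tens (idm b) (sym a c)) (tens (sym a b) (idm c))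
}.

Arguments dom {_}. Arguments cod {_}. Arguments idm {_}. Arguments comp {_}.
Arguments tens_ob {_}. Arguments unit_ob {_}. Arguments tens {_}. Arguments sym {_}.

Section Hopf.
Variable C : SSMC.

Definition is_hom (f : mor C) (a b : ob C) : Prop := dom f = a /\ cod f = b.

Variables (H : ob C) (mu eta Delta eps s : mor C).

Let I := @unit_ob C.
Let HH := tens_ob H H.
Let idH := idm H.

Definition is_hopf_algebra : Prop :=
  (is_hom mu HH H /\ is_hom eta I H /\ is_hom Delta H HH /\ is_hom eps H I
    /\ is_hom s H H) /\
  comp mu (tens mu idH) = comp mu (tens idH mu) /\
  comp mu (tens eta idH) = idH /\ comp mu (tens idH eta) = idH /\
  comp (tens Delta idH) Delta = comp (tens idH Delta) Delta /\
  comp (tens eps idH) Delta = idH /\ comp (tens idH eps) Delta = idH /\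
  comp Delta mu =
    comp (tens mu mu) (comp (tens idH (tens (sym H H) idH)) (tens Delta Delta)) /\
  comp Delta eta = tens eta eta /\
  comp eps mu = tens eps eps /\
  comp eps eta = idm I /\
  comp mu (comp (tens s idH) Delta) = comp eta eps /\
  comp mu (comp (tens idH s) Delta) = comp eta eps.

Variables (Lam lam : mor C).

Definition is_left_cointegral : Prop :=
  is_hom Lam I H /\ comp mu (tens Lam idH) = comp Lam eps.

Definition is_right_integral : Prop :=
  is_hom lam H I /\ comp (tens idH lam) Delta = comp eta lam.

Definition is_integral_hopf_algebra : Prop :=
  is_hopf_algebra /\ is_left_cointegral /\ is_right_integral /\
  comp lam Lam = idm I.

Definition beta : mor C := comp lam mu.
Definition gamma : mor C := comp (tens s idH) (comp Delta Lam).

Definition nondegenerate : Prop :=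
  comp (tens idH beta) (tens gamma idH) = idH /\
  comp (tens beta idH) (tens idH gamma) = idH.

End Hopf.

(* Main.v *)
Require Import Defs.
From Stdlib Require Import List Arith Lia Bool.
Import ListNotations.

Arguments dom_id {_}. Arguments cod_id {_}. Arguments dom_comp {_}. Arguments cod_comp {_}.
Arguments comp_id_l {_}. Arguments comp_id_r {_}. Arguments comp_assoc {_}.
Arguments dom_tens {_}. Arguments cod_tens {_}. Arguments tens_ob_assoc {_}.
Arguments tens_ob_unit_l {_}. Arguments tens_ob_unit_r {_}. Arguments tens_assoc {_}.
Arguments tens_unit_l {_}. Arguments tens_unit_r {_}. Arguments tens_id {_}.
Arguments interchange {_}. Arguments dom_sym {_}. Arguments cod_sym {_}.
Arguments sym_nat {_}. Arguments sym_inv {_}. Arguments sym_hex {_}.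

Inductive atom := Am | An | AD | Ae | As | AL | Al | AX.
Definition atom_eqb (a b : atom) : bool := match a, b with
 | Am,Am | An,An | AD,AD | Ae,Ae | As,As | AL,AL | Al,Al | AX,AX => true | _,_ => false end.
Lemma atom_eqb_eq a b : atom_eqb a b = true -> a = b.
Proof. destruct a, b; easy. Qed.
Definition ain a := match a with Am => 2 | An => 0 | AD => 1 | Ae => 1 | As => 1 | AL => 0 | Al => 1 | AX => 2 end.
Definition aout a := match a with Am => 1 | An => 1 | AD => 2 | Ae => 0 | As => 1 | AL => 1 | Al => 0 | AX => 2 end.
Definition layer := (nat * atom * nat)%type.
Definition lin (x : layer) := let '(k,a,j) := x in k + (ain a + j).
Definition lout (x : layer) := let '(k,a,j) := x in k + (aout a + j).
Definition leqb (x y : layer) := let '(k,a,j) := x in let '(k',a',j') := y in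
  Nat.eqb k k' && atom_eqb a a' && Nat.eqb j j'.
Fixpoint leqbs (d d' : list layer) := match d, d' with
 | [],[] => true | x::d, y::d' => leqb x y && leqbs d d' | _,_ => false end.
Lemma leqbs_eq d d' : leqbs d d' = true -> d = d'.
Proof.
  revert d'; induction d as [|[[k a] j] d IH]; intros [|[[k' a'] j'] d'] h; try easy.
  simpl in h. apply andb_prop in h as [h1 h2]. apply andb_prop in h1 as [h1 h3].
  apply andb_prop in h1 as [h1 h4].
  apply Nat.eqb_eq in h1; apply Nat.eqb_eq in h3; apply atom_eqb_eq in h4.
  subst; f_equal; auto.
Qed.
Fixpoint wf (w : nat) (d : list layer) : bool := match d with
 | [] => true | x :: d => Nat.eqb (lin x) w && wf (lout x) d end.
Fixpoint outw (w : nat) (d : list layer) : nat := match d with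
 | [] => w | x :: d => outw (lout x) d end.
Definition shift k j (x : layer) : layer := let '(k',a,j') := x in (k + k', a, j' + j).
Definition swap2 (x1 x2 : layer) : option (layer * layer) :=
  let '(k1,a1,j1) := x1 in let '(k2,a2,j2) := x2 in
  if k1 + aout a1 <=? k2 then let g := k2 - (k1 + aout a1) in
     Some ((k1 + (ain a1 + g), a2, j2), (k1, a1, g + (aout a2 + j2)))
  else if k2 + ain a2 <=? k1 then let g := k1 - (k2 + ain a2) in
     Some ((k2, a2, g + (ain a1 + j1)), (k2 + (aout a2 + g), a1, j1))
  else None.
Fixpoint swapf (i : nat) (d : list layer) : list layer :=
  match i, d with
  | 0, x1 :: x2 :: r => match swap2 x1 x2 with Some (y1,y2) => y1 :: y2 :: r | None => d end
  | S i, x :: r => x :: swapf i r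
  | _, _ => d end.
Definition replace_at i k j (d1 d2 d : list layer) :=
  firstn i d ++ map (shift k j) d2 ++ skipn (i + length d1) d.
Definition checkm a w i k j d1 d :=
  leqbs (firstn (length d1) (skipn i d)) (map (shift k j) d1)
  && Nat.eqb (outw w (firstn i d)) (k + (a + j)).
Definition kj_of (x y : layer) := let '(k,_,j) := x in let '(k',_,j') := y in (k - k', j - j').
Fixpoint findm a w d1 d occ i fuel : option (nat*nat*nat) :=
  match fuel with 0 => None | S f =>
   match nth_error d i, d1 with
   | Some x, y :: _ => let (k,j) := kj_of x y in
        if checkm a w i k j d1 d then
          (match occ with 0 => Some (i,k,j) | S o => findm a w d1 d o (S i) f end)
        else findm a w d1 d occ (S i) f
   | _, _ => None end end.
Definition rwf a w d1 d2 d occ :=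
  match findm a w d1 d occ 0 (S (length d)) with
  | Some (i,k,j) => replace_at i k j d1 d2 d | None => d end.
Definition insf a w i k j d1 d2 d :=
  if checkm a w i k j d1 d then replace_at i k j d1 d2 d else d.

Lemma findm_ok a w d1 d occ i fuel i' k j :
  findm a w d1 d occ i fuel = Some (i',k,j) -> checkm a w i' k j d1 d = true.
Proof.
  revert occ i; induction fuel; intros occ i h; simpl in h; try easy.
  destruct (nth_error d i); [|easy]. destruct d1 as [|y d1']; [easy|].
  destruct (kj_of l y) as [k0 j0].
  destruct (checkm a w i k0 j0 (y :: d1') d) eqn:E.
  - destruct occ. inversion h; subst; auto. eapply IHfuel; eauto.
  - eapply IHfuel; eauto.
Qed.

Lemma wf_app w d1 d2 : wf w (d1 ++ d2) = wf w d1 && wf (outw w d1) d2.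
Proof. revert w; induction d1; intros w; simpl; auto. rewrite IHd1, andb_assoc; auto. Qed.
Lemma outw_app w d1 d2 : outw w (d1 ++ d2) = outw (outw w d1) d2.
Proof. revert w; induction d1; intros w; simpl; auto. Qed.
Lemma lin_shift k j x : lin (shift k j x) = k + (lin x + j).
Proof. destruct x as [[k' a] j']; simpl; lia. Qed.
Lemma lout_shift k j x : lout (shift k j x) = k + (lout x + j).
Proof. destruct x as [[k' a] j']; simpl; lia. Qed.
Lemma wf_shift k j w d : wf w d = true -> wf (k + (w + j)) (map (shift k j) d) = true.
Proof.
  revert w; induction d; intros w h; simpl in *; auto.
  apply andb_prop in h as [h1 h2]. apply Nat.eqb_eq in h1.
  rewrite lin_shift, lout_shift, h1, Nat.eqb_refl; simpl; auto.
Qed.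
Lemma outw_shift k j w d : outw (k + (w + j)) (map (shift k j) d) = k + (outw w d + j).
Proof. revert w; induction d; intros w; simpl; auto. rewrite lout_shift; auto. Qed.

Section Interp.
Variable C : SSMC.
Variables (H : ob C) (m n D e s L l : mor C).
Hypotheses (dm : dom m = tens_ob H H) (cm : cod m = H)
  (dn : dom n = unit_ob) (cn : cod n = H)
  (dD : dom D = H) (cD : cod D = tens_ob H H)
  (de : dom e = H) (ce : cod e = unit_ob)
  (ds : dom s = H) (cs : cod s = H)
  (dL : dom L = unit_ob) (cL : cod L = H)
  (dl : dom l = H) (cl : cod l = unit_ob).

Definition amor a := match a with Am => m | An => n | AD => D | Ae => e | As => s
  | AL => L | Al => l | AX => sym H H end.
Fixpoint Hn k := match k with 0 => unit_ob | S k' =>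
  match k' with 0 => H | _ => tens_ob H (Hn k') end end.
Definition lmor (x : layer) := let '(k,a,j) := x in
  tens (idm (Hn k)) (tens (amor a) (idm (Hn j))).
Fixpoint interp w d := match d with [] => idm (Hn w) | x :: d => comp (interp (lout x) d) (lmor x) end.

Lemma Hn_S k : Hn (S k) = tens_ob H (Hn k).
Proof. destruct k; simpl; [rewrite tens_ob_unit_r|]; reflexivity. Qed.
Lemma Hn_add a b : tens_ob (Hn a) (Hn b) = Hn (a + b).
Proof.
  induction a; [simpl; rewrite tens_ob_unit_l; auto|].
  simpl plus. rewrite !Hn_S, tens_ob_assoc, IHa; auto.
Qed.
Lemma damor a : dom (amor a) = Hn (ain a).
Proof. destruct a; simpl; auto. apply dom_sym. Qed.
Lemma camor a : cod (amor a) = Hn (aout a).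
Proof. destruct a; simpl; auto. apply cod_sym. Qed.
Lemma dlmor x : dom (lmor x) = Hn (lin x).
Proof. destruct x as [[k a] j]; simpl. rewrite !dom_tens, !dom_id, damor, !Hn_add; auto. Qed.
Lemma clmor x : cod (lmor x) = Hn (lout x).
Proof. destruct x as [[k a] j]; simpl. rewrite !cod_tens, !cod_id, camor, !Hn_add; auto. Qed.

Lemma interp_ty w d : wf w d = true ->
  dom (interp w d) = Hn w /\ cod (interp w d) = Hn (outw w d).
Proof.
  revert w; induction d as [|x d IH]; intros w h; simpl in *.
  - rewrite dom_id, cod_id; auto.
  - apply andb_prop in h as [h1 h2]. apply Nat.eqb_eq in h1.
    destruct (IH _ h2) as [IH1 IH2].
    rewrite dom_comp, cod_comp; try (rewrite clmor; auto).
    rewrite dlmor, h1; auto.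
Qed.

Lemma idl (a : ob C) (f : mor C) : cod f = a -> comp (idm a) f = f.
Proof. intros <-; apply comp_id_l. Qed.
Lemma idr (a : ob C) (f : mor C) : dom f = a -> comp f (idm a) = f.
Proof. intros <-; apply comp_id_r. Qed.

Lemma interp_app w d1 d2 : wf w (d1 ++ d2) = true ->
  interp w (d1 ++ d2) = comp (interp (outw w d1) d2) (interp w d1).
Proof.
  revert w; induction d1 as [|x d1 IH]; intros w h; simpl in *.
  - symmetry; apply idr. apply interp_ty; auto.
  - apply andb_prop in h as [h1 h2]. rewrite IH by auto.
    rewrite wf_app in h2. apply andb_prop in h2 as [h2 h3].
    symmetry; apply comp_assoc.
    + rewrite clmor. symmetry; apply interp_ty; auto.
    + rewrite (proj2 (interp_ty _ _ h2)). symmetry; apply interp_ty; auto.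
Qed.

Ltac split_id := repeat (rewrite <- Hn_add); repeat (rewrite <- tens_id); repeat (rewrite tens_assoc).

Lemma lmor_shift k j x : lmor (shift k j x) = tens (idm (Hn k)) (tens (lmor x) (idm (Hn j))).
Proof. destruct x as [[k' a] j']; simpl. split_id. auto. Qed.

Ltac tyg := repeat first [
    match goal with h : dom ?f = _ |- context [dom ?f] => rewrite h end
  | match goal with h : cod ?f = _ |- context [cod ?f] => rewrite h end
  | rewrite dom_tens | rewrite cod_tens | rewrite dom_id | rewrite cod_id
  | rewrite damor | rewrite camor | rewrite dlmor | rewrite clmor | rewrite Hn_add ];
  try reflexivity; try (f_equal; simpl; lia).

Lemma interp_shift k j w d : wf w d = true ->
  interp (k + (w + j)) (map (shift k j) d) = tens (idm (Hn k)) (tens (interp w d) (idm (Hn j))).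
Proof.
  revert w; induction d as [|x d IH]; intros w h; simpl map; cbn [interp].
  - split_id; auto.
  - simpl in h. apply andb_prop in h as [h1 h2]. apply Nat.eqb_eq in h1.
    rewrite lout_shift, IH by auto. rewrite lmor_shift.
    destruct (interp_ty _ _ h2) as [t1 t2].
    rewrite interchange; try tyg.
    rewrite interchange; try tyg.
    rewrite (idl _ (idm (Hn k))), (idl _ (idm (Hn j))) by tyg. auto.
Qed.

Lemma firstn_skipn_len {A} i q (d : list A) : firstn i d ++ firstn q (skipn i d) ++ skipn (i + q) d = d.
Proof.
  rewrite <- (firstn_skipn i d) at 4. f_equal.
  rewrite <- (firstn_skipn q (skipn i d)) at 2. f_equal.
  rewrite skipn_skipn, Nat.add_comm; auto.
Qed.

Lemma interp_app3 w p q r : wf w (p ++ q ++ r) = true ->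
  interp w (p ++ q ++ r) = comp (interp (outw (outw w p) q) r) (comp (interp (outw w p) q) (interp w p)).
Proof.
  intros h. rewrite interp_app by auto. rewrite wf_app in h. apply andb_prop in h as [h1 h2].
  rewrite interp_app by auto. rewrite wf_app in h2. apply andb_prop in h2 as [h2 h3].
  destruct (interp_ty _ _ h1) as [a1 a2]. destruct (interp_ty _ _ h2) as [b1 b2].
  destruct (interp_ty _ _ h3) as [c1 c2].
  symmetry; apply comp_assoc; congruence.
Qed.

Lemma replace_ok a w i k j d1 d2 d :
  interp a d1 = interp a d2 -> wf a d1 = true -> wf a d2 = true -> outw a d1 = outw a d2 ->
  wf w d = true -> checkm a w i k j d1 d = true ->
  interp w d = interp w (replace_at i k j d1 d2 d) /\ wf w (replace_at i k j d1 d2 d) = true.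
Proof.
  intros R w1 w2 o12 wd ch. unfold checkm in ch. apply andb_prop in ch as [c1 c2].
  apply leqbs_eq in c1. apply Nat.eqb_eq in c2.
  set (pre := firstn i d) in *. set (post := skipn (i + length d1) d).
  assert (Hd : d = pre ++ map (shift k j) d1 ++ post).
  { rewrite <- c1. symmetry; apply firstn_skipn_len. }
  unfold replace_at; fold pre post.
  rewrite Hd in wd. rewrite !wf_app in wd. rewrite c2 in wd.
  apply andb_prop in wd as [wp wd]. apply andb_prop in wd as [ws wpost].
  rewrite outw_shift in wpost.
  assert (wd2 : wf w (pre ++ map (shift k j) d2 ++ post) = true).
  { rewrite !wf_app, c2, wp, wf_shift, outw_shift, <- o12; auto. }
  split; auto.
  assert (wd1 : wf w (pre ++ map (shift k j) d1 ++ post) = true).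
  { rewrite !wf_app, c2, outw_shift, wp, ws, wpost; auto. }
  rewrite Hd at 1. rewrite (interp_app3 _ _ _ _ wd1), (interp_app3 _ _ _ _ wd2).
  rewrite c2, !outw_shift, o12, !interp_shift, R by auto. auto.
Qed.

Lemma rw_sound a w d1 d2 d occ :
  interp a d1 = interp a d2 -> wf a d1 = true -> wf a d2 = true -> outw a d1 = outw a d2 ->
  wf w d = true -> interp w d = interp w (rwf a w d1 d2 d occ).
Proof.
  intros. unfold rwf. destruct (findm a w d1 d occ 0 (S (length d))) as [[[i k] j]|] eqn:E; auto.
  apply findm_ok in E. destruct (replace_ok a w i k j d1 d2 d) as [Q _]; auto.
Qed.

Lemma ins_sound a w i k j d1 d2 d :
  interp a d1 = interp a d2 -> wf a d1 = true -> wf a d2 = true -> outw a d1 = outw a d2 ->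
  wf w d = true -> interp w d = interp w (insf a w i k j d1 d2 d).
Proof.
  intros. unfold insf. destruct (checkm a w i k j d1 d) eqn:E; auto.
  destruct (replace_ok a w i k j d1 d2 d) as [Q _]; auto.
Qed.

Lemma swap2_ok x1 x2 y1 y2 : lout x1 = lin x2 -> swap2 x1 x2 = Some (y1, y2) ->
  comp (lmor x2) (lmor x1) = comp (lmor y2) (lmor y1) /\ lin y1 = lin x1 /\ lout y1 = lin y2
  /\ lout y2 = lout x2.
Proof.
  destruct x1 as [[k1 a1] j1], x2 as [[k2 a2] j2]; simpl. intros hw.
  destruct (k1 + aout a1 <=? k2) eqn:c1.
  - intros h; inversion h; subst; clear h. apply Nat.leb_le in c1.
    set (g := k2 - (k1 + aout a1)) in *.
    assert (E1 : k2 = k1 + (aout a1 + g)) by (unfold g; lia).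
    assert (E2 : j1 = g + (ain a2 + j2)) by (unfold g; lia).
    clearbody g. subst k2 j1. simpl. split; [|lia].
    split_id.
    repeat (rewrite interchange; [|tyg|tyg]).
    repeat (rewrite idl by tyg). repeat (rewrite idr by tyg). auto.
  - destruct (k2 + ain a2 <=? k1) eqn:c2; [|easy].
    intros h; inversion h; subst; clear h. apply Nat.leb_le in c2.
    set (g := k1 - (k2 + ain a2)) in *.
    assert (E1 : k1 = k2 + (ain a2 + g)) by (unfold g; lia).
    assert (E2 : j2 = g + (aout a1 + j1)) by (unfold g; lia).
    clearbody g. subst k1 j2. simpl. split; [|lia].
    split_id.
    repeat (rewrite interchange; [|tyg|tyg]).
    repeat (rewrite idl by tyg). repeat (rewrite idr by tyg). auto.
Qed.

Lemma swap_sound w d i : wf w d = true -> interp w d = interp w (swapf i d).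
Proof.
  revert w i; induction d as [|x d IH]; intros w i h; destruct i; simpl; auto.
  - destruct d as [|x2 d]; auto. destruct (swap2 x x2) as [[y1 y2]|] eqn:E; auto.
    simpl in h. apply andb_prop in h as [h1 h]. apply andb_prop in h as [h2 h3].
    apply Nat.eqb_eq in h1, h2.
    destruct (swap2_ok _ _ _ _ (eq_sym h2) E) as [Q [Q1 [Q2 Q3]]].
    cbn [interp]. rewrite Q3.
    destruct (interp_ty _ _ h3) as [t1 t2].
    rewrite <- !comp_assoc; try (rewrite ?clmor, ?dlmor, ?t1; auto; fail).
    rewrite Q; auto.
  - simpl in h. apply andb_prop in h as [h1 h2]. rewrite (IH _ i) by auto. auto.
Qed.

End Interp.


Section Hopf.
Variable C : SSMC.
Variables (H : ob C) (m n D e s L l : mor C).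
Hypotheses (dm : dom m = tens_ob H H) (cm : cod m = H)
  (dn : dom n = unit_ob) (cn : cod n = H)
  (dD : dom D = H) (cD : cod D = tens_ob H H)
  (de : dom e = H) (ce : cod e = unit_ob)
  (ds : dom s = H) (cs : cod s = H)
  (dL : dom L = unit_ob) (cL : cod L = H)
  (dl : dom l = H) (cl : cod l = unit_ob).
Hypotheses
 (h_assoc : comp m (tens m (idm H)) = comp m (tens (idm H) m))
 (h_unitl : comp m (tens n (idm H)) = idm H)
 (h_unitr : comp m (tens (idm H) n) = idm H)
 (h_coassoc : comp (tens D (idm H)) D = comp (tens (idm H) D) D)
 (h_counitl : comp (tens e (idm H)) D = idm H)
 (h_counitr : comp (tens (idm H) e) D = idm H)
 (h_bialg : comp D m = comp (tens m m) (comp (tens (idm H) (tens (sym H H) (idm H))) (tens D D)))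
 (h_Dn : comp D n = tens n n)
 (h_em : comp e m = tens e e)
 (h_en : comp e n = idm unit_ob)
 (h_antl : comp m (comp (tens s (idm H)) D) = comp n e)
 (h_antr : comp m (comp (tens (idm H) s) D) = comp n e)
 (h_coint : comp m (tens L (idm H)) = comp L e)
 (h_int : comp (tens (idm H) l) D = comp n l)
 (h_norm : comp l L = idm unit_ob).

Local Notation I := (interp C H m n D e s L l).

Lemma RW a w d1 d2 d occ : I a d1 = I a d2 -> wf a d1 = true -> wf a d2 = true ->
  outw a d1 = outw a d2 -> wf w d = true -> I w d = I w (rwf a w d1 d2 d occ).
Proof. apply rw_sound; auto. Qed.
Lemma INS a w i k j d1 d2 d : I a d1 = I a d2 -> wf a d1 = true -> wf a d2 = true ->
  outw a d1 = outw a d2 -> wf w d = true -> I w d = I w (insf a w i k j d1 d2 d).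
Proof. apply ins_sound; auto. Qed.
Lemma SW w d i : wf w d = true -> I w d = I w (swapf i d).
Proof. apply swap_sound; auto. Qed.

Ltac nrm := match goal with |- interp _ _ _ _ _ _ _ _ _ ?w ?d = interp _ _ _ _ _ _ _ _ _ ?w' ?d' =>
  let x := eval vm_compute in d in let y := eval vm_compute in d' in
  change (I w x = I w' y) end.
Ltac chk d := match goal with |- interp _ _ _ _ _ _ _ _ _ _ ?d' = _ =>
  tryif constr_eq d d' then fail 1 "no change" else idtac end.
Ltac rwo R occ := match goal with |- interp _ _ _ _ _ _ _ _ _ ?w ?d = _ =>
  rewrite (RW _ w _ _ d occ R) by reflexivity; nrm; chk d end.
Ltac rw R := rwo R 0.
Ltac rwr R := rwo (eq_sym R) 0.
Ltac ins R i k j := match goal with |- interp _ _ _ _ _ _ _ _ _ ?w ?d = _ =>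
  rewrite (INS _ w i k j _ _ d R) by reflexivity; nrm; chk d end.
Ltac insr R i k j := ins (eq_sym R) i k j.
Ltac sw i := match goal with |- interp _ _ _ _ _ _ _ _ _ ?w ?d = _ =>
  rewrite (SW w d i) by reflexivity; nrm; chk d end.
Ltac sws l := match l with nil => idtac | cons ?i ?r => sw i; sws r end.
Ltac pr := match goal with |- interp _ _ _ _ _ _ _ _ _ _ ?d = interp _ _ _ _ _ _ _ _ _ _ ?d' => idtac d; idtac "  ==  "; idtac d' end.

Ltac obn := repeat (rewrite ?tens_ob_assoc, ?tens_ob_unit_l, ?tens_ob_unit_r).
Ltac ty := repeat first [
    match goal with h : dom ?f = _ |- context [dom ?f] => rewrite h end
  | match goal with h : cod ?f = _ |- context [cod ?f] => rewrite h end
  | rewrite dom_tens | rewrite cod_tens | rewrite dom_id | rewrite cod_id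
  | rewrite dom_sym | rewrite cod_sym
  | match goal with |- context [dom (comp ?g ?f)] => rewrite (dom_comp f g) by ty end
  | match goal with |- context [cod (comp ?g ?f)] => rewrite (cod_comp f g) by ty end ];
  obn; reflexivity.
Ltac simp := cbn [interp lmor lout lin amor Hn aout ain Nat.add];
  repeat first [rewrite tens_unit_l | rewrite tens_unit_r | rewrite (idl C) by ty | rewrite (idr C) by ty].

Lemma tsplit1 (f g : mor C) : tens f g = comp (tens f (idm (cod g))) (tens (idm (dom f)) g).
Proof. rewrite interchange by (rewrite ?cod_id, ?dom_id; auto). rewrite comp_id_l, comp_id_r; auto. Qed.
Lemma tsplit2 (f g : mor C) : tens f g = comp (tens (idm (cod f)) g) (tens f (idm (dom g))).
Proof. rewrite interchange by (rewrite ?cod_id, ?dom_id; auto). rewrite comp_id_l, comp_id_r; auto. Qed.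

Lemma R_assoc : I 3 [(0,Am,1);(0,Am,0)] = I 3 [(1,Am,0);(0,Am,0)].
Proof. simp. auto. Qed.
Lemma R_unitl : I 1 [(0,An,1);(0,Am,0)] = I 1 [].
Proof. simp. auto. Qed.
Lemma R_unitr : I 1 [(1,An,0);(0,Am,0)] = I 1 [].
Proof. simp. auto. Qed.
Lemma R_coassoc : I 1 [(0,AD,0);(0,AD,1)] = I 1 [(0,AD,0);(1,AD,0)].
Proof. simp. auto. Qed.
Lemma R_counitl : I 1 [(0,AD,0);(0,Ae,1)] = I 1 [].
Proof. simp. auto. Qed.
Lemma R_counitr : I 1 [(0,AD,0);(1,Ae,0)] = I 1 [].
Proof. simp. auto. Qed.

Lemma R_antl : I 1 [(0,AD,0);(0,As,1);(0,Am,0)] = I 1 [(0,Ae,0);(0,An,0)].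
Proof. simp. rewrite <- h_antl. symmetry; apply comp_assoc; ty. Qed.
Lemma R_antr : I 1 [(0,AD,0);(1,As,0);(0,Am,0)] = I 1 [(0,Ae,0);(0,An,0)].
Proof. simp. rewrite <- h_antr. symmetry; apply comp_assoc; ty. Qed.
Lemma R_coint : I 1 [(0,AL,1);(0,Am,0)] = I 1 [(0,Ae,0);(0,AL,0)].
Proof. simp. auto. Qed.
Lemma R_int : I 1 [(0,AD,0);(1,Al,0)] = I 1 [(0,Al,0);(0,An,0)].
Proof. simp. auto. Qed.
Lemma R_norm : I 0 [(0,AL,0);(0,Al,0)] = I 0 [].
Proof. simp. auto. Qed.
Lemma R_en : I 0 [(0,An,0);(0,Ae,0)] = I 0 [].
Proof. simp. auto. Qed.
Lemma R_em : I 2 [(0,Am,0);(0,Ae,0)] = I 2 [(1,Ae,0);(0,Ae,0)].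
Proof. simp. rewrite h_em, tsplit1, ce, de, tens_unit_r. auto. Qed.
Lemma R_Dn : I 0 [(0,An,0);(0,AD,0)] = I 0 [(0,An,0);(1,An,0)].
Proof. simp. rewrite h_Dn, tsplit2, cn, dn, tens_unit_r. auto. Qed.
Lemma R_bialg : I 2 [(0,Am,0);(0,AD,0)] = I 2 [(1,AD,0);(0,AD,2);(1,AX,1);(0,Am,2);(1,Am,0)].
Proof. simp. rewrite h_bialg, (tsplit2 m m), cm, dm, (tsplit1 D D), cD, dD.
  repeat (rewrite <- comp_assoc by ty). auto. Qed.

Ltac ra := repeat (rewrite <- comp_assoc by ty).

Lemma sym_I (a : ob C) : sym a unit_ob = idm a.
Proof.
  assert (h := sym_hex a unit_ob unit_ob). rewrite tens_ob_unit_l, tens_unit_l, tens_unit_r in h.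
  assert (h2 := sym_inv a unit_ob). rewrite tens_ob_unit_r in h2.
  transitivity (comp (idm a) (sym a unit_ob)).
  { rewrite idl; auto. rewrite cod_sym, tens_ob_unit_l; auto. }
  rewrite <- h2 at 1. rewrite <- comp_assoc, <- h; auto; rewrite ?cod_sym, ?dom_sym, ?tens_ob_unit_l, ?tens_ob_unit_r; auto.
Qed.
Lemma sym_I' (a : ob C) : sym unit_ob a = idm a.
Proof.
  assert (h2 := sym_inv a unit_ob). rewrite tens_ob_unit_r, sym_I in h2.
  rewrite <- h2. rewrite idr; auto. rewrite dom_sym, tens_ob_unit_l; auto.
Qed.



Lemma R_XX : I 2 [(0,AX,0);(0,AX,0)] = I 2 [].
Proof. simp. apply sym_inv. Qed.

Lemma nat_pt1 f : dom f = unit_ob -> cod f = H -> comp (sym H H) (tens f (idm H)) = tens (idm H) f.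
Proof. intros h1 h2. assert (q := sym_nat f (idm H)). rewrite h1, h2, cod_id, dom_id, sym_I' in q.
  rewrite q. apply idr. rewrite dom_tens, dom_id, h1, ?tens_ob_unit_r, ?tens_ob_unit_l; auto. Qed.
Lemma nat_pt2 f : dom f = unit_ob -> cod f = H -> comp (sym H H) (tens (idm H) f) = tens f (idm H).
Proof. intros h1 h2. assert (q := sym_nat (idm H) f). rewrite h1, h2, cod_id, dom_id, sym_I in q.
  rewrite q. apply idr. rewrite dom_tens, dom_id, h1, ?tens_ob_unit_r, ?tens_ob_unit_l; auto. Qed.
Lemma nat_cp1 f : dom f = H -> cod f = unit_ob -> comp (tens (idm H) f) (sym H H) = tens f (idm H).
Proof. intros h1 h2. assert (q := sym_nat f (idm H)). rewrite h1, h2, cod_id, dom_id, sym_I' in q.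
  rewrite <- q. apply idl. rewrite cod_tens, cod_id, h2, ?tens_ob_unit_r, ?tens_ob_unit_l; auto. Qed.
Lemma nat_cp2 f : dom f = H -> cod f = unit_ob -> comp (tens f (idm H)) (sym H H) = tens (idm H) f.
Proof. intros h1 h2. assert (q := sym_nat (idm H) f). rewrite h1, h2, cod_id, dom_id, sym_I in q.
  rewrite <- q. apply idl. rewrite cod_tens, cod_id, h2, ?tens_ob_unit_r, ?tens_ob_unit_l; auto. Qed.

Lemma R_XL1 : I 1 [(0,AL,1);(0,AX,0)] = I 1 [(1,AL,0)].
Proof. simp. apply nat_pt1; auto. Qed.
Lemma R_XL2 : I 1 [(1,AL,0);(0,AX,0)] = I 1 [(0,AL,1)].
Proof. simp. apply nat_pt2; auto. Qed.
Lemma R_Xn1 : I 1 [(0,An,1);(0,AX,0)] = I 1 [(1,An,0)].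
Proof. simp. apply nat_pt1; auto. Qed.
Lemma R_Xn2 : I 1 [(1,An,0);(0,AX,0)] = I 1 [(0,An,1)].
Proof. simp. apply nat_pt2; auto. Qed.
Lemma R_Xl1 : I 2 [(0,AX,0);(1,Al,0)] = I 2 [(0,Al,1)].
Proof. simp. apply nat_cp1; auto. Qed.
Lemma R_Xl2 : I 2 [(0,AX,0);(0,Al,1)] = I 2 [(1,Al,0)].
Proof. simp. apply nat_cp2; auto. Qed.
Lemma R_Xe1 : I 2 [(0,AX,0);(1,Ae,0)] = I 2 [(0,Ae,1)].
Proof. simp. apply nat_cp1; auto. Qed.
Lemma R_Xe2 : I 2 [(0,AX,0);(0,Ae,1)] = I 2 [(1,Ae,0)].
Proof. simp. apply nat_cp2; auto. Qed.
Lemma R_Xs1 : I 2 [(0,As,1);(0,AX,0)] = I 2 [(0,AX,0);(1,As,0)].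
Proof. simp. assert (q := sym_nat s (idm H)). rewrite ds, cs, cod_id, dom_id in q. auto. Qed.
Lemma R_Xs2 : I 2 [(1,As,0);(0,AX,0)] = I 2 [(0,AX,0);(0,As,1)].
Proof. simp. assert (q := sym_nat (idm H) s). rewrite ds, cs, cod_id, dom_id in q. auto. Qed.

Definition T := [(0,AL,1);(0,AD,1);(1,Am,0);(1,Al,0)].

Lemma F1 : I 1 (T ++ [(0,As,0)]) = I 1 [].
Proof. nrm. sw 3. sw 2. insr R_unitr 5 0 0. rwr R_int. rw R_bialg. sw 8. sw 7. rwr R_assoc. sw 3. sw 2. rwr R_coassoc. sw 5. sw 4. rw R_antl. rw R_counitl. sw 0. sw 1. rw R_XL1. sw 2. sw 0. rw R_unitl. rw R_coint. rw R_norm. rw R_counitr. reflexivity. Qed.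

Lemma FA : I 1 [(0,AL,1);(0,AD,1);(1,AX,0);(0,Am,1)] = I 1 [(0,AL,1);(0,AD,1);(2,As,0);(1,Am,0)].
Proof. symmetry. insr R_counitl 0 0 0. rwr R_coint. rw R_bialg. sws [6;5;4;3;2;1].  rw R_assoc. sws [1;0;2]. rw R_coassoc. sws [6;5;4]. rw R_antr. rw R_counitr. sws [1;2;3]. rw R_unitr. reflexivity. Qed.

Lemma F2 : I 1 ([(0,As,0)] ++ T) = I 1 [].
Proof. nrm. sws [0;1]. rwr FA. sw 3. rw R_Xl1. rw R_int. rw R_norm. rw R_unitl. reflexivity. Qed.

Lemma R_hexml : I 3 [(1,Am,0);(1,Al,0)] = I 3 [(0,AX,1);(1,AX,0);(0,Am,1);(0,Al,1)].
Proof. simp.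
  assert (q := sym_nat (idm H) (comp l m)).
  rewrite cod_id, dom_id, cod_comp, dom_comp, cl, dm, sym_I, sym_hex in q by (rewrite cm, dl; auto).
  rewrite idl in q by ty.
  rewrite interchange by ty. rewrite interchange by ty. rewrite (idl C H) by ty. rewrite q.
  ra. auto.
Qed.

Definition Tsh := [(0,AL,2);(0,AD,2);(1,Am,1);(1,Al,1)].
Lemma TA : I 2 ([(0,As,1);(0,Am,0)] ++ T) = I 2 ([(0,AX,0)] ++ Tsh ++ [(0,Am,0)]).
Proof. nrm. sws [1;0;2;1]. rwr R_assoc. rwr FA. sws [3;4]. rw R_hexml. rw R_XX. sws [1;0]. reflexivity. Qed.

Lemma AM : I 2 [(0,Am,0);(0,As,0)] = I 2 [(0,AX,0);(0,As,1);(1,As,0);(0,Am,0)].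
Proof. symmetry. insr F1 4 0 0. sw 1. rw TA. rw R_Xs2. rw R_XX. rw F2. reflexivity. Qed.

Lemma FAs : I 2 [(1,AD,0);(0,AX,1);(1,Am,0);(1,Al,0)] = I 2 [(0,AD,1);(0,As,2);(1,Am,0);(1,Al,0)].
Proof. symmetry. insr R_unitr 4 0 0. rwr R_int. rw R_bialg. sw 7. sw 6. rwr R_assoc. sw 2. sw 1. rwr R_coassoc. sw 4. sw 3. rw R_antl. rw R_counitl. sws [0;1]. rw R_unitl. reflexivity. Qed.

Lemma CS : I 1 (T ++ [(0,AD,0);(1,As,0)]) = I 1 ([(0,AD,0);(0,AX,0)] ++ Tsh).
Proof. nrm. sws [3;2;4;3]. rw R_coassoc. rwr FAs. sws [1;0]. rw R_hexml. rw R_XX. sws [2;1]. reflexivity. Qed.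

Lemma ACM : I 1 [(0,As,0);(0,AD,0)] = I 1 [(0,AD,0);(0,AX,0);(0,As,1);(1,As,0)].
Proof. insr R_XX 2 0 0. insr F1 3 0 1. rwr CS. rw F2. rw R_Xs1. rw R_Xs2. reflexivity. Qed.

Lemma SN : I 0 [(0,An,0);(0,As,0)] = I 0 [(0,An,0)].
Proof. insr R_unitr 2 0 0. sw 1. rwr R_Dn. rw R_antl. rw R_en. reflexivity. Qed.

Lemma C9 : I 0 [(0,AL,0);(0,AD,0);(0,As,1);(0,Al,1)] = I 0 [(0,AL,0);(0,As,0);(0,Al,0);(0,An,0)].
Proof. insr F2 4 0 0. sw 3. insr R_XX 2 0 0. rwr R_Xs2. rwo (eq_sym R_Xs1) 1. sw 3. rwr ACM.
  rw R_Xl2. rw R_int. rwr SN. rw F2. reflexivity. Qed.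

Lemma R_XD0 : I 2 [(1,AD,0);(0,AX,1);(1,AX,0)] = I 2 [(0,AX,0);(0,AD,1)].
Proof. simp. assert (q := sym_nat (idm H) D). rewrite cod_id, dom_id, cD, dD, sym_hex in q.
  rewrite <- q. ra. auto. Qed.
Lemma R_DX : I 2 [(0,AX,0);(1,AD,0);(0,AX,1)] = I 2 [(0,AD,1);(1,AX,0)].
Proof. insr R_XX 3 1 0. rw R_XD0. rw R_XX. reflexivity. Qed.

Definition P2 := [(1,AL,0);(1,AD,0);(1,As,1);(0,Am,1);(0,Al,1)].
Lemma PHI2 : I 1 P2 = I 1 [(0,AL,1);(0,As,1);(0,Al,1)].
Proof. nrm. insr F1 0 0 0. sws [4;5]. insr R_XX 6 0 1. rwr AM. rwr R_XL1. rw R_DX. rw FA. sws [7;6;8;7]. rw C9. sw 7. rw R_unitl. sws [3;2;1;0;4;3;2;1;5;4;3;2]. rw F1. reflexivity. Qed.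

Definition P1 := [(0,AL,1);(0,AD,1);(0,As,2);(1,Am,0);(1,Al,0)].
Lemma PHI1 : I 1 P1 = I 1 [].
Proof. nrm. sws [2;3]. rw F1. reflexivity. Qed.

Lemma tcr (a b : mor C) c : cod b = dom a -> tens (comp a b) (idm c) = comp (tens a (idm c)) (tens b (idm c)).
Proof. intros h. rewrite interchange by (rewrite ?cod_id, ?dom_id; auto). rewrite (idl C c (idm c)); auto. apply cod_id. Qed.
Lemma tcl (a b : mor C) c : cod b = dom a -> tens (idm c) (comp a b) = comp (tens (idm c) a) (tens (idm c) b).
Proof. intros h. rewrite interchange by (rewrite ?cod_id, ?dom_id; auto). rewrite (idl C c (idm c)); auto. apply cod_id. Qed.

Lemma B1 : comp (tens (idm H) (comp l m)) (tens (comp (tens s (idm H)) (comp D L)) (idm H)) = I 1 P1.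
Proof. unfold P1. simp. rewrite tcl by ty. rewrite !tcr by ty. rewrite tens_assoc, tens_id. ra. auto. Qed.
Lemma B2 : comp (tens (comp l m) (idm H)) (tens (idm H) (comp (tens s (idm H)) (comp D L))) = I 1 P2.
Proof. unfold P2. simp. rewrite tcr by ty. rewrite !tcl by ty. ra. auto. Qed.
Lemma B3 : tens (comp l (comp s L)) (idm H) = I 1 [(0,AL,1);(0,As,1);(0,Al,1)].
Proof. simp. rewrite !tcr by ty. ra. auto. Qed.
Lemma B4 : comp l (comp s L) = I 0 [(0,AL,0);(0,As,0);(0,Al,0)].
Proof. simp. ra. auto. Qed.

Lemma MAIN :
  ((comp (tens (idm H) (comp l m)) (tens (comp (tens s (idm H)) (comp D L)) (idm H)) = idm H) /\
   (comp (tens (comp l m) (idm H)) (tens (idm H) (comp (tens s (idm H)) (comp D L))) = idm H))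
  <-> comp l (comp s L) = idm unit_ob.
Proof.
  rewrite B1, B2, PHI1, PHI2. split.
  - intros [_ h]. rewrite B4. change (I 0 [(0,AL,0);(0,As,0);(0,Al,0)] = I 0 []). change (I 1 [(0,AL,1);(0,As,1);(0,Al,1)] = I 1 []) in h.
    insr R_en 3 0 0. sws [2;1;0]. rw h. rw R_en. reflexivity.
  - intros h. split; [reflexivity|]. rewrite <- B3, h. apply tens_unit_l.
Qed.

End Hopf.


Theorem mainTheorem2 (C : SSMC) (H : ob C) (mu eta Delta eps s Lam lam : mor C) :
  is_integral_hopf_algebra C H mu eta Delta eps s Lam lam ->
  (nondegenerate C H mu Delta s Lam lam <->
   comp lam (comp s Lam) = idm (@unit_ob C)).
Proof.
  intros [[[[dm cm] [[dn cn] [[dD cD] [[de ce] [ds cs]]]]] hs] [[[dL cL] hcoint] [[[dl cl] hint] hnorm]]].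
  destruct hs as [h1 [h2 [h3 [h4 [h5 [h6 [h7 [h8 [h9 [h10 [h11 h12]]]]]]]]]]].
  unfold nondegenerate, beta, gamma.
  apply (MAIN C H mu eta Delta eps s Lam lam); assumption.
Qed.
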